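(* Let $\xi:[0,\ell)\to\mathbb{R}^n$ be a self-contracted curve. Then for every $\tau\in[0,\ell)$ and all $t_1,t_2\in(\tau,\ell)$ with $\xi(t_1)\neq\xi(\tau)$ and $\xi(t_2)\neq\xi(\tau)$, $$\angle\big(\xi(t_1)-\xi(\tau),\,\xi(t_2)-\xi(\tau)\big)<\frac{\pi}{2},$$ where $\angle(v,w)\in[0,\pi]$ denotes the Euclidean angle between nonzero vectors $v,w$.
   Context: Let $(X,d)$ be a metric space and $\ell\in(0,\infty]$. A map $\xi:[0,\ell)\to X$ (not necessarily continuous) is called self-contracted if $d(\xi(t_2),\xi(t_3))\le d(\xi(t_1),\xi(t_3))$ for all $0\le t_1\le t_2\le t_3<\ell$. Here $X=\mathbb{R}^n$ with the Euclidean distance. *)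

(* Defs.v *)
From Stdlib Require Import Reals Lra.
From Stdlib Require Fin.
Open Scope R_scope.

Definition Rn (n : nat) : Type := Fin.t n -> R.

Fixpoint sum_fin (n : nat) : (Fin.t n -> R) -> R :=
  match n return (Fin.t n -> R) -> R with
  | O => fun _ => 0
  | S m => fun f => f Fin.F1 + sum_fin m (fun i => f (Fin.FS i))
  end.

Definition vsub {n : nat} (x y : Rn n) : Rn n := fun i => x i - y i.
Definition dot {n : nat} (x y : Rn n) : R := sum_fin n (fun i => x i * y i).
Definition norm {n : nat} (x : Rn n) : R := sqrt (dot x x).
Definition dist {n : nat} (x y : Rn n) : R := norm (vsub x y).

Definition angle {n : nat} (v w : Rn n) : R := acos (dot v w / (norm v * norm w)).

(* The length parameter ell in (0, +infty]: None encodes +infty. *)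
Definition ext_pos (ell : option R) : Prop :=
  match ell with Some l => 0 < l | None => True end.

Definition lt_ell (t : R) (ell : option R) : Prop :=
  match ell with Some l => t < l | None => True end.

Definition in_dom (ell : option R) (t : R) : Prop := 0 <= t /\ lt_ell t ell.

(* self-contracted map xi : [0,ell) -> R^n (only values on [0,ell) matter) *)
Definition self_contracted {n : nat} (ell : option R) (xi : R -> Rn n) : Prop :=
  forall t1 t2 t3, in_dom ell t1 -> in_dom ell t3 -> t1 <= t2 -> t2 <= t3 ->
    dist (xi t2) (xi t3) <= dist (xi t1) (xi t3).

(* Main.v *)
Require Import Defs.
From Stdlib Require Import Reals.
From Stdlib Require Import Lra FunctionalExtensionality.
Open Scope R_scope.

Lemma sum_fin_ext n (f g : Fin.t n -> R) : (forall i, f i = g i) -> sum_fin n f = sum_fin n g.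
Proof.
  induction n; simpl; intros H; [reflexivity|].
  rewrite H; f_equal; apply IHn; intros; apply H.
Qed.

Lemma sum_fin_lin n (f g h : Fin.t n -> R) a b :
  (forall i, f i = a * g i + b * h i) -> sum_fin n f = a * sum_fin n g + b * sum_fin n h.
Proof.
  revert f g h; induction n; simpl; intros f g h H; [ring|].
  rewrite H, (IHn (fun i => f (Fin.FS i)) (fun i => g (Fin.FS i)) (fun i => h (Fin.FS i))).
  ring. intros; apply H.
Qed.

Lemma dot_sym n (a b : Rn n) : dot a b = dot b a.
Proof. unfold dot; apply sum_fin_ext; intros; ring. Qed.

Lemma dot_sub n (a b : Rn n) :
  dot (vsub b a) (vsub b a) = dot b b - 2 * dot a b + dot a a.
Proof.
  unfold dot, vsub.
  assert (E: forall i, (b i - a i) * (b i - a i) = 1 * (b i * b i) + 1 * ((-2) * (a i * b i) + a i * a i)) by (intros; ring).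
  rewrite (sum_fin_lin _ _ _ _ 1 1 E).
  assert (E2: forall i, (-2) * (a i * b i) + a i * a i = (-2) * (a i * b i) + 1 * (a i * a i)) by (intros; ring).
  rewrite (sum_fin_lin _ _ _ _ (-2) 1 E2). ring.
Qed.

Lemma sum_fin_nonneg n (f : Fin.t n -> R) : (forall i, 0 <= f i) -> 0 <= sum_fin n f.
Proof.
  induction n; simpl; intros H; [lra|].
  specialize (IHn (fun i => f (Fin.FS i)) (fun i => H _)). specialize (H Fin.F1). lra.
Qed.

Lemma sum_fin_zero n (f : Fin.t n -> R) : (forall i, 0 <= f i) -> sum_fin n f = 0 -> forall i, f i = 0.
Proof.
  induction n; simpl; intros H S i.
  - inversion i.
  - assert (A := sum_fin_nonneg _ (fun i => f (Fin.FS i)) (fun i => H _)).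
    assert (B := H Fin.F1).
    assert (f Fin.F1 = 0) by lra.
    assert (sum_fin n (fun i => f (Fin.FS i)) = 0) by lra.
    revert f H S A B H0 H1.
    pattern i. apply Fin.caseS'; intros; auto.
    apply (IHn (fun i => f (Fin.FS i))); auto.
Qed.

Lemma dot_pos n (x y : Rn n) : x <> y -> 0 < dot (vsub x y) (vsub x y).
Proof.
  intros H. unfold dot.
  assert (N : 0 <= sum_fin n (fun i => vsub x y i * vsub x y i))
    by (apply sum_fin_nonneg; intros; nra).
  destruct (Req_dec (sum_fin n (fun i => vsub x y i * vsub x y i)) 0) as [Z|Z]; [|lra].
  exfalso; apply H; apply functional_extensionality; intros i.
  assert (K := sum_fin_zero _ _ (fun i => Rle_0_sqr (vsub x y i)) Z i).
  unfold vsub in K; simpl in K. apply Rmult_integral in K. lra.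
Qed.

Lemma dist_sym n (x y : Rn n) : Defs.dist x y = Defs.dist y x.
Proof. unfold Defs.dist, norm, dot, vsub. f_equal. apply sum_fin_ext; intros; ring. Qed.

Lemma key n (x0 x1 x2 : Rn n) :
  x1 <> x0 -> Defs.dist x2 x1 <= Defs.dist x2 x0 -> 0 < dot (vsub x1 x0) (vsub x2 x0).
Proof.
  intros H D. unfold Defs.dist, norm in D.
  assert (P := dot_pos _ _ _ H).
  assert (0 <= dot (vsub x2 x1) (vsub x2 x1)) by (unfold dot; apply sum_fin_nonneg; intros; nra).
  assert (0 <= dot (vsub x2 x0) (vsub x2 x0)) by (unfold dot; apply sum_fin_nonneg; intros; nra).
  apply sqrt_le_0 in D; auto.
  assert (E : vsub x2 x1 = vsub (vsub x2 x0) (vsub x1 x0))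
    by (apply functional_extensionality; intros; unfold vsub; ring).
  rewrite E, dot_sub in D. lra.
Qed.

Lemma acos_pos x : 0 < x -> acos x < PI / 2.
Proof.
  intros H. assert (P := PI_RGT_0). unfold acos.
  destruct (Rle_dec x (-1)); [lra|].
  destruct (Rle_dec 1 x); [lra|].
  assert (0 < 1 - x²) by (unfold Rsqr; nra).
  assert (0 < sqrt (1 - x²)) by (apply sqrt_lt_R0; auto).
  assert (0 < x / sqrt (1 - x²)) by (apply Rdiv_lt_0_compat; auto).
  assert (A := atan_increasing _ _ H2). rewrite atan_0 in A. lra.
Qed.

Theorem mainTheorem2 (n : nat) (ell : option R) (xi : R -> Rn n) :
  ext_pos ell -> self_contracted ell xi ->
  forall tau t1 t2,
    in_dom ell tau ->
    tau < t1 -> lt_ell t1 ell ->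
    tau < t2 -> lt_ell t2 ell ->
    xi t1 <> xi tau -> xi t2 <> xi tau ->
    angle (vsub (xi t1) (xi tau)) (vsub (xi t2) (xi tau)) < PI / 2.
Proof.
  intros _ SC tau t1 t2 [H0 Ht] H1 L1 H2 L2 N1 N2.
  assert (D : 0 < dot (vsub (xi t1) (xi tau)) (vsub (xi t2) (xi tau))).
  { destruct (Rle_dec t1 t2).
    - apply key; auto. rewrite (dist_sym _ (xi t2)), (dist_sym _ (xi t2)). apply (SC tau t1 t2); unfold in_dom; try split; auto; lra.
    - rewrite dot_sym. apply key; auto. rewrite (dist_sym _ (xi t1)), (dist_sym _ (xi t1)). apply (SC tau t2 t1); unfold in_dom; try split; auto; lra. }
  unfold angle. apply acos_pos.
  assert (0 < norm (vsub (xi t1) (xi tau))) by (apply sqrt_lt_R0, dot_pos; auto).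
  assert (0 < norm (vsub (xi t2) (xi tau))) by (apply sqrt_lt_R0, dot_pos; auto).
  apply Rdiv_lt_0_compat; auto. apply Rmult_lt_0_compat; auto.
Qed.
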